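(* Assume: (A1) $f(x,y)$ and each component of $g(x,y)$ are convex in $y$ for each fixed $x$, and $f,g$ are twice continuously differentiable; (A2) $Y\subseteq\mathbb{R}^m$ is a compact convex set with $\{y:\exists x\in X \text{ such that } g(x,y)\le 0\}\subseteq\mathrm{int}(Y)$; (R1) for each $x\in X$ there exists $y$ with $g(x,y)<0$. Let $\epsilon\ge0$ and $x\in X$. Then $y$ is an $\epsilon$-solution of the lower level problem at $x$ if and only if there exists $\lambda$ such that $(x,y,\lambda)\in\mathcal{C}(\epsilon,0)$. Moreover, if $\mu\ge0$ and $y$ is an $\epsilon$-solution of the lower level problem at $x$, then there exists $\lambda$ such that $(x,y,\lambda)\in\mathcal{C}(\epsilon,\mu)$.
   Context: Let $f:\mathbb{R}^n\times\mathbb{R}^m\to\mathbb{R}$, $g:\mathbb{R}^n\times\mathbb{R}^m\to\mathbb{R}^p$, $G:\mathbb{R}^n\to\mathbb{R}^q$; vector inequalities componentwise; $X=\{x:G(x)\le0\}$. The lower level problem at $x$ is $\min_y\{f(x,y):g(x,y)\le0\}$; $y$ is an $\epsilon$-solution of it if $f(x,y)\le\min_{y'}\{f(x,y'):g(x,y')\le0\}+\epsilon$ and $g(x,y)\le\epsilon$ (componentwise). For $\mu\ge0$, $h_\mu(\lambda,x)=\min_y\{\mu\|y\|^2+f(x,y)+\lambda^{\mathsf T}g(x,y):y\in Y\}$ with $Y$ from (A2), and $\mathcal{C}(\epsilon,\mu)=\{(x,y,\lambda): G(x)\le0,\ g(x,y)\le\epsilon,\ \lambda\ge0,\ f(x,y)-h_\mu(\lambda,x)\le\epsilon\}$.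 *)

(* Defs.v *)
From HB Require Import structures.
From mathcomp Require Import all_boot all_order all_algebra.
From mathcomp Require Import all_classical all_reals all_analysis.
Set Implicit Arguments. Unset Strict Implicit. Unset Printing Implicit Defensive.
Import Order.TTheory GRing.Theory Num.Theory.
Import numFieldNormedType.Exports.
Local Open Scope classical_set_scope.
Local Open Scope ring_scope.

Section Defs.
Variable R : realType.

Definition vle_c (k : nat) (u : 'rV[R]_k) (c : R) : Prop := forall i, u 0 i <= c.
Definition vlt_c (k : nat) (u : 'rV[R]_k) (c : R) : Prop := forall i, u 0 i < c.
Definition vge0 (k : nat) (u : 'rV[R]_k) : Prop := forall i, 0 <= u 0 i.

Definition sqnorm (k : nat) (y : 'rV[R]_k) : R := \sum_(i < k) (y 0 i) ^+ 2.
Definition dotv (k : nat) (u v : 'rV[R]_k) : R := \sum_(i < k) u 0 i * v 0 i.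

Definition ebasis (N : nat) (i : 'I_N) : 'rV[R]_N := delta_mx 0 i.

Definition C2 (N : nat) (F : 'rV[R]_N -> R) : Prop :=
  forall i j : 'I_N,
    (forall z, derivable F z (ebasis i)) /\
    continuous ('D_(ebasis i) F) /\
    (forall z, derivable ('D_(ebasis i) F) z (ebasis j)) /\
    continuous ('D_(ebasis j) ('D_(ebasis i) F)).

Definition joint (n m : nat) (F : 'rV[R]_n -> 'rV[R]_m -> R) : 'rV[R]_(n + m) -> R :=
  fun z => F (lsubmx z) (rsubmx z).

Definition convex_fun_rV (m : nat) (F : 'rV[R]_m -> R) : Prop :=
  forall (y1 y2 : 'rV[R]_m) (t : R), 0 <= t -> t <= 1 ->
    F (t *: y1 + (1 - t) *: y2) <= t * F y1 + (1 - t) * F y2.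

Definition convex_set_rV (m : nat) (Y : set 'rV[R]_m) : Prop :=
  forall (y1 y2 : 'rV[R]_m) (t : R), Y y1 -> Y y2 -> 0 <= t -> t <= 1 ->
    Y (t *: y1 + (1 - t) *: y2).

Variables (n m p q : nat).
Variables (f : 'rV[R]_n -> 'rV[R]_m -> R) (g : 'rV[R]_n -> 'rV[R]_m -> 'rV[R]_p)
          (G : 'rV[R]_n -> 'rV[R]_q).

Definition Xset : set 'rV[R]_n := [set x | vle_c (G x) 0].

Definition ll_value (x : 'rV[R]_n) : R :=
  inf [set f x y | y in [set y | vle_c (g x y) 0]].

Definition eps_solution (eps : R) (x : 'rV[R]_n) (y : 'rV[R]_m) : Prop :=
  f x y <= ll_value x + eps /\ vle_c (g x y) eps.

Definition h_mu (Y : set 'rV[R]_m) (mu : R) (lam : 'rV[R]_p) (x : 'rV[R]_n) : R :=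
  inf [set mu * sqnorm y + f x y + dotv lam (g x y) | y in Y].

Definition Cset (Y : set 'rV[R]_m) (eps mu : R)
  (x : 'rV[R]_n) (y : 'rV[R]_m) (lam : 'rV[R]_p) : Prop :=
  [/\ vle_c (G x) 0, vle_c (g x y) eps, vge0 lam &
      f x y - h_mu Y mu lam x <= eps].

End Defs.

(* Main.v *)
Require Import Defs.
From HB Require Import structures.
From mathcomp Require Import all_boot all_order all_algebra.
From mathcomp Require Import all_classical all_reals all_analysis.
From mathcomp Require Import ring lra.
Import Order.TTheory GRing.Theory Num.Theory.
Import numFieldNormedType.Exports.
Local Open Scope classical_set_scope.
Local Open Scope ring_scope.

Section Aux.
Variable R : realType.
Variable m : nat.
Local Notation V := 'rV[R]_m.

Lemma conv_ext (F G : V -> R) : F =1 G -> convex_fun_rV F -> convex_fun_rV G.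
Proof. by move=> e hF y1 y2 t t0 t1; rewrite -!e; apply: hF. Qed.

Lemma conv_add (F G : V -> R) : convex_fun_rV F -> convex_fun_rV G ->
  convex_fun_rV (fun y => F y + G y).
Proof.
move=> hF hG y1 y2 t t0 t1.
have := hF y1 y2 t t0 t1; have := hG y1 y2 t t0 t1; nra.
Qed.

Lemma conv_sum (I : Type) (r : seq I) (c : I -> R) (G : I -> V -> R) :
  (forall i, 0 <= c i) -> (forall i, convex_fun_rV (G i)) ->
  convex_fun_rV (fun y => \sum_(i <- r) c i * G i y).
Proof.
move=> c0 hG; elim: r => [|a r IH] y1 y2 t t0 t1.
  rewrite !big_nil; lra.
rewrite !big_cons.
have := IH y1 y2 t t0 t1; have := hG a y1 y2 t t0 t1; have := c0 a.
set A := G a _; set B := G a y1; set C := G a y2.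
set S1 := \sum_(_ <- _) _; set S2 := \sum_(_ <- _) _; set S3 := \sum_(_ <- _) _.
move=> ca hA hS.
have : c a * A <= c a * (t * B + (1 - t) * C) by rewrite ler_wpM2l.
nra.
Qed.

Lemma cube_ub (F : V -> R) (M : R) : convex_fun_rV F -> 0 < M ->
  exists U, forall y : V, (forall i, `|y 0 i| <= M) -> F y <= U.
Proof.
move=> hF M0.
suff P : forall k (z : V), exists U, forall y : V, (forall i, `|y 0 i| <= M) ->
    (forall i : 'I_m, (k <= i)%N -> y 0 i = z 0 i) -> F y <= U.
  have [U HU] := P m 0; exists U => y hy; apply: HU => // i hi.
  by have := ltn_ord i; rewrite ltnNge hi.
elim=> [|k IH] z.
  exists (F z) => y _ hy; suff -> : y = z by [].
  by apply/rowP => i; apply: hy.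
case: (ltnP k m) => [km|mk]; last first.
  have [U HU] := IH z; exists U => y hy hz; apply: HU => // i hi.
  by have := ltn_ord i; rewrite ltnNge (leq_trans mk hi).
pose j := Ordinal km.
pose z1 : V := \row_i (if i == j then M else z 0 i).
pose z2 : V := \row_i (if i == j then - M else z 0 i).
have [U1 HU1] := IH z1; have [U2 HU2] := IH z2.
exists (Num.max U1 U2) => y hy hz.
pose y1 : V := \row_i (if i == j then M else y 0 i).
pose y2 : V := \row_i (if i == j then - M else y 0 i).
have hyj := hy j; rewrite ler_norml in hyj; case/andP: hyj => hyj1 hyj2.
pose t := (y 0 j + M) / (2 * M).
have t0 : 0 <= t by apply: divr_ge0; lra.
have t1 : t <= 1 by rewrite /t ler_pdivrMr; lra.
have ey : y = t *: y1 + (1 - t) *: y2.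
  apply/rowP => i; rewrite /y1 /y2 !mxE; case: eqP => [->|_]; last by ring.
  rewrite /t; field. all: try lra.
have c1 : forall i, `|y1 0 i| <= M.
  by move=> i; rewrite mxE; case: eqP => _; [rewrite ger0_norm // ltW | exact: hy].
have c2 : forall i, `|y2 0 i| <= M.
  by move=> i; rewrite mxE; case: eqP => _; [rewrite normrN ger0_norm // ltW | exact: hy].
have d1 : forall i : 'I_m, (k <= i)%N -> y1 0 i = z1 0 i.
  move=> i hi; rewrite !mxE; case: eqP => // /eqP nij; apply: hz.
  by rewrite ltn_neqAle hi andbT eq_sym; apply: contra nij => /eqP e; apply/eqP/val_inj.
have d2 : forall i : 'I_m, (k <= i)%N -> y2 0 i = z2 0 i.
  move=> i hi; rewrite !mxE; case: eqP => // /eqP nij; apply: hz.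
  by rewrite ltn_neqAle hi andbT eq_sym; apply: contra nij => /eqP e; apply/eqP/val_inj.
have h1 := HU1 _ c1 d1; have h2 := HU2 _ c2 d2.
have hc := hF y1 y2 t t0 t1; rewrite -ey in hc.
have m1 : U1 <= Num.max U1 U2 by rewrite le_max lexx.
have m2 : U2 <= Num.max U1 U2 by rewrite le_max lexx orbT.
nra.
Qed.

Lemma cube_lb (F : V -> R) (M : R) : convex_fun_rV F -> 0 < M ->
  exists c, forall y : V, (forall i, `|y 0 i| <= M) -> c <= F y.
Proof.
move=> hF M0; have [U HU] := @cube_ub F M hF M0.
exists (2 * F 0 - U) => y hy.
have hny : forall i, `|(- y) 0 i| <= M by move=> i; rewrite mxE normrN.
have := HU _ hny.
have h0 : (2^-1 : R) *: y + (1 - 2^-1) *: (- y) = 0.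
  by apply/rowP => i; rewrite !mxE; field.
have := hF y (- y) (2^-1) ltac:(lra) ltac:(lra); rewrite h0.
lra.
Qed.

Lemma dual1 (Y : set V) (F h : V -> R) (v : R) (y0 : V) :
  convex_set_rV Y -> convex_fun_rV F -> convex_fun_rV h -> Y y0 -> h y0 < 0 ->
  (forall y, Y y -> h y <= 0 -> v <= F y) ->
  exists mu, 0 <= mu /\ forall y, Y y -> v <= F y + mu * h y.
Proof.
move=> cY cF ch Yy0 hy0 feas.
have key : forall y1 y2, Y y1 -> Y y2 -> 0 < h y1 -> h y2 < 0 ->
    (v - F y1) / h y1 <= (F y2 - v) / (- h y2).
  move=> y1 y2 Y1 Y2 p1 n2.
  pose t := - h y2 / (h y1 - h y2).
  have d0 : 0 < h y1 - h y2 by lra.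
  have t0 : 0 <= t by apply: divr_ge0; lra.
  have t1 : t <= 1 by rewrite /t ler_pdivrMr; lra.
  have et : t * (h y1 - h y2) = - h y2 by rewrite /t mulfVK ?gt_eqF.
  have hz := ch y1 y2 t t0 t1.
  have hz0 : h (t *: y1 + (1 - t) *: y2) <= 0 by nra.
  have fz := feas _ (cY _ _ _ Y1 Y2 t0 t1) hz0.
  have fc := cF y1 y2 t t0 t1.
  have H : v * (h y1 - h y2) <= (t * F y1 + (1 - t) * F y2) * (h y1 - h y2).
    by apply: ler_wpM2r; [lra | exact: le_trans fz fc].
  have e1 : (t * F y1 + (1 - t) * F y2) * (h y1 - h y2) = - h y2 * F y1 + h y1 * F y2.
    have e2 : (1 - t) * (h y1 - h y2) = h y1 by rewrite mulrBl mul1r et; ring.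
    have -> : (t * F y1 + (1 - t) * F y2) * (h y1 - h y2) =
      F y1 * (t * (h y1 - h y2)) + F y2 * ((1 - t) * (h y1 - h y2)) by ring.
    by rewrite et e2; ring.
  rewrite e1 in H.
  rewrite ler_pdivrMr // mulrAC ler_pdivlMr; last by lra.
  nra.
pose S := [set s : R | s = 0 \/ exists y, [/\ Y y, 0 < h y & s = (v - F y) / h y]].
have ub : forall y2, Y y2 -> h y2 < 0 -> ubound S ((F y2 - v) / (- h y2)).
  move=> y2 Y2 n2 s [->|[y1 [Y1 p1 ->]]]; last exact: key.
  apply: divr_ge0; last by lra.
  by have := feas _ Y2 (ltW n2); lra.
have hS : has_ubound S by exists ((F y0 - v) / (- h y0)); exact: ub.
have S0 : S 0 by left.
exists (sup S); split; first exact: ub_le_sup.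
move=> y Yy; case: (ltgtP (h y) 0) => [n|p|e].
- have := ge_sup (ex_intro _ 0 S0) (ub _ Yy n).
  rewrite ler_pdivlMr; last by lra.
  nra.
- have : (v - F y) / h y <= sup S by apply: ub_le_sup => //; right; exists y.
  rewrite ler_pdivrMr //; nra.
- by rewrite e mulr0 addr0; apply: feas => //; rewrite e.
Qed.

Lemma dualk (g : nat -> V -> R) (k : nat) :
  (forall i, (i < k)%N -> convex_fun_rV (g i)) ->
  forall (Y : set V) (F : V -> R) (v : R) (y0 : V),
  convex_set_rV Y -> convex_fun_rV F -> Y y0 ->
  (forall i, (i < k)%N -> g i y0 < 0) ->
  (forall y, Y y -> (forall i, (i < k)%N -> g i y <= 0) -> v <= F y) ->
  exists lam : nat -> R, (forall i, 0 <= lam i) /\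
    forall y, Y y -> v <= F y + \sum_(i < k) lam i * g i y.
Proof.
elim: k => [|k IH] cg Y F v y0 cY cF Yy0 sl feas.
  exists (fun _ => 0); split=> // y Yy; rewrite big_ord0 addr0.
  by apply: feas => // i; rewrite ltn0.
pose Y' := [set y | Y y /\ g k y <= 0].
have cY' : convex_set_rV Y'.
  move=> y1 y2 t [Y1 g1] [Y2 g2] t0 t1; split; first exact: cY.
  have := cg k (ltnSn k) y1 y2 t t0 t1; nra.
have [lam [lam0 hlam]] : exists lam : nat -> R, (forall i, 0 <= lam i) /\
    forall y, Y' y -> v <= F y + \sum_(i < k) lam i * g i y.
  apply: (IH _ Y' F v y0) => //.
  - by move=> i ik; apply: cg; rewrite ltnS ltnW.
  - by split => //; apply/ltW/sl.
  - by move=> i ik; apply: sl; rewrite ltnS ltnW.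
  - move=> y [Yy gy] hi; apply: feas => // i; rewrite ltnS leq_eqVlt.
    by case/orP => [/eqP ->|]; [| apply: hi].
pose F' := fun y => F y + \sum_(i < k) lam i * g i y.
have cF' : convex_fun_rV F'.
  apply: conv_add => //.
  apply: (@conv_sum _ (index_enum (ordinal k)) (fun i : ordinal k => lam i) (fun i : ordinal k => g i)) => // i.
  by apply: cg; rewrite ltnS ltnW.
have [mu [mu0 hmu]] := @dual1 Y F' (g k) v y0 cY cF' (cg k (ltnSn k)) Yy0 (sl k (ltnSn k))
  (fun y Yy gy => hlam y (conj Yy gy)).
exists (fun i => if i == k then mu else lam i); split.
  by move=> i; case: eqP.
move=> y Yy; rewrite big_ord_recr /= eqxx.
have -> : \sum_(i < k) (if (i : nat) == k then mu else lam i) * g i y =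
          \sum_(i < k) lam i * g i y.
  by apply: eq_bigr => i _; rewrite ltn_eqF.
by rewrite addrA; apply: hmu.
Qed.
End Aux.
Theorem proposition3 (R : realType) (n m p q : nat)
  (f : 'rV[R]_n -> 'rV[R]_m -> R) (g : 'rV[R]_n -> 'rV[R]_m -> 'rV[R]_p)
  (G : 'rV[R]_n -> 'rV[R]_q) (Y : set 'rV[R]_m)
  (* (A1) *)
  (A1_f_conv : forall x, convex_fun_rV (f x))
  (A1_g_conv : forall x (k : 'I_p), convex_fun_rV (fun y => g x y 0 k))
  (A1_f_C2 : C2 (joint f))
  (A1_g_C2 : forall k : 'I_p, C2 (joint (fun x y => g x y 0 k)))
  (* (A2) *)
  (A2_compact : compact Y) (A2_convex : convex_set_rV Y)
  (A2_int : [set y | exists x, Xset G x /\ vle_c (g x y) 0] `<=` interior Y)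
  (* (R1) *)
  (R1 : forall x, Xset G x -> exists y, vlt_c (g x y) 0)
  (eps : R) (heps : 0 <= eps) (x : 'rV[R]_n) (hx : Xset G x) :
  (forall y, eps_solution f g eps x y <-> exists lam, Cset f g G Y eps 0 x y lam) /\
  (forall mu, 0 <= mu -> forall y, eps_solution f g eps x y ->
     exists lam, Cset f g G Y eps mu x y lam).
Proof.
have FsY : forall y, vle_c (g x y) 0 -> Y y.
  by move=> y gy; apply: interior_subset; apply: A2_int; exists x.
have [y0 hy0] := R1 x hx.
have Fy0 : vle_c (g x y0) 0 by move=> i; apply/ltW.
have Yy0 := FsY _ Fy0.
have [M [M0 HM]] : exists M : R, 0 < M /\ forall y, Y y -> forall i, `|y 0 i| <= M.
  have [M1 [_ HM1]] := compact_bounded A2_compact.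
  exists (`|M1| + 1); split; first by have := normr_ge0 M1; lra.
  move=> y Yy i.
  have e1 : `|y 0 i| <= `|y|.
    by rewrite [X in _ <= X]mx_normrE; apply: (le_bigmax _ _ (0, i)).
  apply: le_trans e1 _; apply: (HM1 (`|M1| + 1)) => //.
  by have := ler_norm M1; lra.
have lbf : exists c, forall y, Y y -> c <= f x y.
  have [c hc] := @cube_lb _ _ (f x) M (A1_f_conv x) M0.
  by exists c => y Yy; apply: hc; exact: HM.
set v := ll_value f g x.
have vle : forall y, vle_c (g x y) 0 -> v <= f x y.
  move=> y gy; apply: ge_inf; last by exists y.
  have [c hc] := lbf; exists c => _ [y' gy' <-]; apply: hc; exact: FsY.
have [lam [lam0 hlam]] : exists lam : 'rV[R]_p, vge0 lam /\
    forall y, Y y -> v <= f x y + dotv lam (g x y).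
  pose gn := fun (i : nat) (y : 'rV[R]_m) => oapp (fun j : 'I_p => g x y 0 j) 0 (insub i).
  have gnE : forall (j : 'I_p) y, gn j y = g x y 0 j by move=> j y; rewrite /gn valK.
  have cgn : forall i, (i < p)%N -> convex_fun_rV (gn i).
    move=> i ip.
    exact: (@conv_ext _ _ (fun y => g x y 0 (Ordinal ip)) (gn i)
      (fun y => esym (gnE (Ordinal ip) y)) (A1_g_conv x (Ordinal ip))).
  have slg : forall i, (i < p)%N -> gn i y0 < 0.
    by move=> i ip; move: (hy0 (Ordinal ip)); rewrite -gnE; exact: id.
  have feasg : forall y, Y y -> (forall i, (i < p)%N -> gn i y <= 0) -> v <= f x y.
    by move=> y _ hg; apply: vle => j; rewrite -gnE; exact: hg (ltn_ord j).
  have [ln [ln0 hln]] := @dualk _ _ gn p cgn Y (f x) v y0 A2_convex (A1_f_conv x) Yy0 slg feasg.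
  exists (\row_j ln j); split; first by move=> j; rewrite mxE.
  move=> y Yy; rewrite /dotv.
  have -> : \sum_(j < p) (\row_j ln j) 0 j * g x y 0 j = \sum_(i < p) ln i * gn i y.
    by apply: eq_bigr => j _; rewrite mxE gnE.
  exact: hln.
have partb : forall mu, 0 <= mu -> forall y, eps_solution f g eps x y ->
    Cset f g G Y eps mu x y lam.
  move=> mu mu0 y [fy gy]; split => //.
  have : v <= h_mu f g Y mu lam x.
    apply: lb_le_inf; first by exists (mu * sqnorm y0 + f x y0 + dotv lam (g x y0)), y0.
    move=> _ [y' Yy' <-]; have := hlam y' Yy'.
    have : 0 <= mu * sqnorm y'.
      by apply: mulr_ge0 => //; apply: sumr_ge0 => i _; apply: sqr_ge0.
    lra.
  rewrite -/v in fy; lra.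
split; last by move=> mu mu0 y hy; exists lam; apply: partb.
move=> y; split; first by move=> hy; exists lam; apply: partb.
case=> lam' [_ gy l0 hle]; split => //.
have : h_mu f g Y 0 lam' x <= v.
  apply: lb_le_inf; first by exists (f x y0), y0.
  move=> _ [y' gy' <-].
  have lbL : has_lbound [set 0 * sqnorm y + f x y + dotv lam' (g x y) | y in Y].
    have cL : convex_fun_rV (fun y => 0 * sqnorm y + f x y + dotv lam' (g x y)).
      apply: (@conv_ext _ _ (fun y => f x y + \sum_(j < p) lam' 0 j * g x y 0 j)).
        by move=> z; rewrite mul0r add0r.
      apply: conv_add => //.
      exact: (@conv_sum _ _ _ _ (fun j : 'I_p => lam' 0 j) (fun (j : 'I_p) z => g x z 0 j)).
    have [c hc] := @cube_lb _ _ _ M cL M0.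
    by exists c => _ [z Yz <-]; apply: hc; exact: HM.
  apply: le_trans (ge_inf lbL (ex_intro2 _ _ y' (FsY _ gy') erefl)) _.
  have : dotv lam' (g x y') <= 0.
    by apply: sumr_le0 => j _; apply: mulr_ge0_le0.
  rewrite mul0r add0r; lra.
rewrite -/v; lra.
Qed.
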